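(* Let $N\ge2$ and let $(b,a)\in\mathcal{M}$ satisfy $S(b,a)=(b,a)$. Then (i) $I_k(b,a)=I_{N-k}(b,a)$ for all $1\le k\le N-1$; (ii) $\lambda_j(b,a)=-\lambda_{2N+1-j}(b,a)$ for all $1\le j\le 2N$; (iii) if $N$ is even, then $I_{N/2}(b,a)=0$ and $\lambda_N(b,a)=\lambda_{N+1}(b,a)=0$.
   Context: $\mathcal{M}=\mathbb{R}^N\times\mathbb{R}_{>0}^N$, indices mod $N$; $S(b,a)=(b',a')$ with $b'_j=-b_{N-j}$, $a'_j=a_{N-j-1}$. $y_1,y_2$ solve $a_{k-1}y(k-1)+b_ky(k)+a_ky(k+1)=\lambda y(k)$ with $y_1(0)=1,y_1(1)=0,y_2(0)=0,y_2(1)=1$; $\Delta_\lambda=y_1(N,\lambda)+y_2(N+1,\lambda)$; $\lambda_1\le\dots\le\lambda_{2N}$ are the roots of $\Delta_\lambda^2-4$ with multiplicity (the eigenvalues of the periodic and antiperiodic Jacobi matrices of $(b,a)$), satisfying $\lambda_1<\lambda_2\le\lambda_3<\dots<\lambda_{2N}$. Actions: $I_k=\frac1\pi\int_{\lambda_{2k}}^{\lambda_{2k+1}}\operatorname{arcosh}|\Delta_\lambda/2|\,d\lambda$ for $1\le k\le N-1$. *)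

(* Defs.v *)
From HB Require Import structures.
From mathcomp Require Import all_boot all_order all_algebra.
From mathcomp Require Import all_classical all_reals all_analysis.
Set Implicit Arguments. Unset Strict Implicit. Unset Printing Implicit Defensive.
Import Order.TTheory GRing.Theory Num.Theory.
Local Open Scope ring_scope.

Section Toda.
Variables (R : realType) (N : nat).

(* A point of M = R^N x R_{>0}^N is a pair (b, a) of functions 'I_N -> R;
   [per f k] reads f at index k mod N. *)
Definition per (f : 'I_N -> R) (k : nat) : R :=
  if @insub nat (fun i => i < N)%N 'I_N (modn k N) is Some i then f i else 0.

Definition in_M (b a : 'I_N -> R) : Prop := forall i, 0 < a i.

Definition Sinv (ba : ('I_N -> R) * ('I_N -> R)) : ('I_N -> R) * ('I_N -> R) :=
  (fun j : 'I_N => - per ba.1 (N - j)%N,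
   fun j : 'I_N => per ba.2 (N - j - 1)%N).

(* Solutions of a_{k-1} y(k-1) + b_k y(k) + a_k y(k+1) = lambda y(k), computed
   as polynomials in lambda: [ypair b a y0 y1 k] = (y(k), y(k+1)). *)
Fixpoint ypair (b a : 'I_N -> R) (y0 y1 : {poly R}) (k : nat) : {poly R} * {poly R} :=
  match k with
  | 0 => (y0, y1)
  | k'.+1 =>
      let p := ypair b a y0 y1 k' in
      (p.2, (per a k'.+1)^-1 *: (('X - (per b k'.+1)%:P) * p.2 - per a k' *: p.1))
  end.

Definition ysol (b a : 'I_N -> R) (y0 y1 : {poly R}) (k : nat) : {poly R} :=
  (ypair b a y0 y1 k).1.

Definition y1 b a := ysol b a 1 0.
Definition y2 b a := ysol b a 0 1.

Definition discr (b a : 'I_N -> R) : {poly R} := y1 b a N + y2 b a N.+1.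

Definition is_root_list (b a : 'I_N -> R) (s : seq R) : Prop :=
  [/\ sorted <=%R s, size s = (2 * N)%N &
      (discr b a) ^+ 2 - 4%:P = lead_coef ((discr b a) ^+ 2 - 4%:P) *: \prod_(x <- s) ('X - x%:P)].

Definition lambdas (b a : 'I_N -> R) : seq R := xget [::] [set s | is_root_list b a s].

(* lambda_j, 1-indexed: lambda_1 <= ... <= lambda_{2N} *)
Definition lam (b a : 'I_N -> R) (j : nat) : R := nth 0 (lambdas b a) j.-1.

Definition arcosh (x : R) : R := ln (x + Num.sqrt (x ^+ 2 - 1)).

Definition action (b a : 'I_N -> R) (k : nat) : R :=
  pi^-1 * Rintegral lebesgue_measure `[lam b a (2 * k)%N, lam b a (2 * k).+1]%classic
            (fun l => arcosh `|(discr b a).[l] / 2|).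

End Toda.

(* Main.v *)
Require Import Defs.
From HB Require Import structures.
From mathcomp Require Import all_boot all_order all_algebra.
From mathcomp Require Import all_classical all_reals all_analysis measurable_realfun.
From mathcomp Require Import ring lra zify.
Set Implicit Arguments. Unset Strict Implicit. Unset Printing Implicit Defensive.
Import Order.TTheory GRing.Theory Num.Theory.
Local Open Scope ring_scope.


Section Mat.
Variable R : realType.
Record M2 := mk { e11 : R; e12 : R; e21 : R; e22 : R }.
Definition mmul (A B : M2) := mk (e11 A * e11 B + e12 A * e21 B) (e11 A * e12 B + e12 A * e22 B)
  (e21 A * e11 B + e22 A * e21 B) (e21 A * e12 B + e22 A * e22 B).
Definition mT (A : M2) := mk (e11 A) (e21 A) (e12 A) (e22 A).
Definition msc (c : R) (A : M2) := mk (c * e11 A) (c * e12 A) (c * e21 A) (c * e22 A).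
Definition mtr (A : M2) := e11 A + e22 A.
Definition mdet (A : M2) := e11 A * e22 A - e12 A * e21 A.
Definition mI := mk 1 0 0 1.

Lemma mmulA A B C : mmul A (mmul B C) = mmul (mmul A B) C.
Proof. case: A => ????; case: B => ????; case: C => ????; rewrite /mmul /mT /msc /=; congr mk; ring. Qed.
Lemma mmul1l A : mmul mI A = A.
Proof. case: A => ????; rewrite /mmul /mT /msc /=; congr mk; ring. Qed.
Lemma mmul1r A : mmul A mI = A.
Proof. case: A => ????; rewrite /mmul /mT /msc /=; congr mk; ring. Qed.
Lemma mT_mul A B : mT (mmul A B) = mmul (mT B) (mT A).
Proof. case: A => ????; case: B => ????; rewrite /mmul /mT /msc /=; congr mk; ring. Qed.
Lemma msc_mul c d A B : mmul (msc c A) (msc d B) = msc (c * d) (mmul A B).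
Proof. case: A => ????; case: B => ????; rewrite /mmul /mT /msc /=; congr mk; ring. Qed.
Lemma mT_sc c A : mT (msc c A) = msc c (mT A).
Proof. by case: A. Qed.
Lemma mtr_comm A B : mtr (mmul A B) = mtr (mmul B A).
Proof. case: A => ????; case: B => ????; rewrite /mtr /=; ring. Qed.
Lemma mtr_sc c A : mtr (msc c A) = c * mtr A.
Proof. case: A => ????; rewrite /mtr /=; ring. Qed.
Lemma mtr_T A : mtr (mT A) = mtr A.
Proof. by case: A. Qed.
Lemma mdet_mul A B : mdet (mmul A B) = mdet A * mdet B.
Proof. case: A => ????; case: B => ????; rewrite /mdet /=; ring. Qed.
Lemma mdet_sc c A : mdet (msc c A) = c ^+ 2 * mdet A.
Proof. case: A => ????; rewrite /mdet /=; ring. Qed.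
Lemma mdet_T A : mdet (mT A) = mdet A.
Proof. case: A => ????; rewrite /mdet /=; ring. Qed.
Definition mR := mk 0 1 (-1) 0.
Lemma mR_scalar X c : mmul mR (mmul X (mmul mR (msc c (mT X)))) = msc (- c * mdet X) mI.
Proof. case: X => ????; rewrite /mmul /mT /msc /mdet /=; congr mk; ring. Qed.
Lemma scalar_tr s : mtr (msc s mI) ^+ 2 = 4 * mdet (msc s mI).
Proof. rewrite /mtr /mdet /=; ring. Qed.
End Mat.


Section Toda2.
Variables (R : realType) (N : nat) (b a : 'I_N -> R).

Definition Tm (j : nat) (x : R) : M2 R :=
  mk 0 1 (- per a j.-1 / per a j) ((x - per b j) / per a j).
Fixpoint Pm (k n : nat) (x : R) : M2 R :=
  match n with 0 => mI R | n'.+1 => mmul (Tm (k + n') x) (Pm k n' x) end.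

Lemma ypair_eval y0 y1 n x :
  (ypair b a y0 y1 n).1.[x] = e11 (Pm 1 n x) * y0.[x] + e12 (Pm 1 n x) * y1.[x] /\
  (ypair b a y0 y1 n).2.[x] = e21 (Pm 1 n x) * y0.[x] + e22 (Pm 1 n x) * y1.[x].
Proof.
elim: n => [|n [IH1 IH2]] /=; first by split; ring.
rewrite add1n; split; first by rewrite IH2 /=; ring.
rewrite hornerZ hornerD hornerN hornerM hornerZ hornerXsubC IH1 IH2 /=.
rewrite /Tm /=; ring.
Qed.

Lemma discr_tr x : (discr b a).[x] = mtr (Pm 1 N x).
Proof.
rewrite /discr /y1 /y2 /ysol hornerD /=.
have [-> _] := ypair_eval 1 0 N x.
have [_ ->] := ypair_eval 0 1 N x.
by rewrite /mtr !hornerC !mulr1 !mulr0 addr0 add0r.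
Qed.

End Toda2.


Section Toda3.
Variables (R : realType) (N : nat) (b a : 'I_N -> R).
Hypothesis HN : (0 < N)%N.
Hypothesis Ha : in_M b a.
Hypothesis HS : Sinv (b, a) = (b, a).

Lemma per_ord (f : 'I_N -> R) k : per f k = f (Ordinal (ltn_pmod k HN)).
Proof.
rewrite /per; case: insubP => [i _ Hi|]; last by rewrite ltn_pmod.
by congr f; apply: val_inj; rewrite /= Hi.
Qed.

Lemma per_pos k : 0 < per a k.
Proof. by rewrite per_ord; apply: Ha. Qed.

Lemma per_neq0 k : per a k != 0.
Proof. by rewrite gt_eqF // per_pos. Qed.

Lemma per_mod (f : 'I_N -> R) k m : (k %% N = m %% N)%N -> per f k = per f m.
Proof. by rewrite /per => ->. Qed.

Lemma per_per (f : 'I_N -> R) k : per f (k + N) = per f k.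
Proof. by apply: per_mod; rewrite modnDr. Qed.

Lemma hb (i : 'I_N) : b i = - per b (N - i).
Proof. by have := congr1 (fun p => p.1 i) HS; rewrite /Sinv /= => {1}<-. Qed.
Lemma ha (i : 'I_N) : a i = per a (N - i - 1).
Proof. by have := congr1 (fun p => p.2 i) HS; rewrite /Sinv /= => {1}<-. Qed.

Lemma per_b_sym m : (m <= 2 * N)%N -> per b m = - per b (2 * N - m).
Proof.
move=> Hm; rewrite per_ord hb /=; congr (- _); apply: per_mod.
apply/eqP; rewrite -(eqn_modDr m).
have Hr := ltn_pmod m HN.
rewrite -modnDmr subnK ?(ltnW Hr) // modnn.
by rewrite subnK // modnMl.
Qed.

Lemma per_a_sym m : (m < 2 * N)%N -> per a m = per a (2 * N - 1 - m).
Proof.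
move=> Hm; rewrite per_ord ha /=; apply: per_mod.
apply/eqP; rewrite -(eqn_modDr m.+1).
have Hr := ltn_pmod m HN.
have -> : (N - m %% N - 1 + m.+1 = (N - m %% N - 1 + 1) + m)%N by lia.
rewrite -modnDmr.
have -> : (N - m %% N - 1 + 1 + m %% N = N)%N by lia.
have -> : (2 * N - 1 - m + m.+1 = 2 * N)%N by lia.
by rewrite modnn modnMl.
Qed.

End Toda3.


Section Toda4.
Variables (R : realType) (N : nat) (b a : 'I_N -> R).
Hypothesis HN : (0 < N)%N.
Hypothesis Ha : in_M b a.
Hypothesis HS : Sinv (b, a) = (b, a).

Lemma Tm_sym j x : (1 <= j < 2 * N)%N ->
  Tm b a j x = msc (- per a j.-1 / per a j) (mT (Tm b a (2 * N - j) (- x))).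
Proof.
case/andP=> H1 H2.
have e1 : per a (2 * N - j).-1 = per a j.
  by rewrite (per_a_sym HN HS H2); congr per; lia.
have e2 : per a (2 * N - j) = per a j.-1.
  rewrite (per_a_sym HN HS (_ : (j.-1 < 2 * N)%N)); last by lia.
  by congr per; lia.
have e3 : per b (2 * N - j) = - per b j.
  by rewrite (per_b_sym HN HS (_ : (j <= 2 * N)%N)) ?opprK //; lia.
have n1 := per_neq0 HN Ha j; have n2 := per_neq0 HN Ha j.-1.
rewrite /Tm /mT /msc /= e1 e2 e3; congr mk; field; by rewrite ?n1 ?n2.
Qed.

Lemma Pm_left k n x : Pm b a k n.+1 x = mmul (Pm b a k.+1 n x) (Tm b a k x).
Proof.
elim: n => [|n IH]; first by rewrite /= addn0 mmul1r mmul1l.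
rewrite -[Pm b a k n.+2 x]/(mmul (Tm b a (k + n.+1) x) (Pm b a k n.+1 x)) IH.
rewrite -[Pm b a k.+1 n.+1 x]/(mmul (Tm b a (k.+1 + n) x) (Pm b a k.+1 n x)).
by rewrite mmulA addSnnS.
Qed.

Lemma Pm_split k n1 n2 x :
  Pm b a k (n1 + n2) x = mmul (Pm b a (k + n1) n2 x) (Pm b a k n1 x).
Proof.
elim: n2 => [|n IH] /=; first by rewrite addn0 mmul1l.
by rewrite addnS /= IH mmulA addnA.
Qed.

Lemma Tm_per j x : (1 <= j)%N -> Tm b a (j + N) x = Tm b a j x.
Proof.
move=> Hj; rewrite /Tm !per_per.
have -> : ((j + N).-1 = j.-1 + N)%N by lia.
by rewrite per_per.
Qed.

Lemma Pm_per k n x : (1 <= k)%N -> Pm b a (k + N) n x = Pm b a k n x.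
Proof.
move=> Hk; elim: n => [|n IH] //=.
rewrite IH addnAC Tm_per //; lia.
Qed.

Lemma Pm_det k n x : (1 <= k)%N ->
  mdet (Pm b a k n x) = per a k.-1 / per a (k + n).-1.
Proof.
move=> Hk; elim: n => [|n IH] /=.
  by rewrite addn0 divff ?(per_neq0 HN Ha) // /mdet /=; ring.
rewrite mdet_mul IH /mdet /Tm /=.
have n1 := per_neq0 HN Ha (k + n).-1; have n2 := per_neq0 HN Ha (k + n).
rewrite addnS /=; field; by rewrite ?n1 ?n2.
Qed.

Lemma Pm_sym n x : (n <= 2 * N - 1)%N ->
  exists c, Pm b a 1 n x = msc c (mT (Pm b a (2 * N - n) n (- x))).
Proof.
elim: n => [|n IH] Hn /=.
  by exists 1; rewrite /mI /msc /mT /=; congr mk; ring.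
have [c Hc] := IH (ltnW Hn).
rewrite Tm_sym ?add1n; last by lia.
exists ((- per a n.+1.-1 / per a n.+1) * c).
rewrite Hc msc_mul -mT_mul.
have -> : (2 * N - n = (2 * N - n.+1).+1)%N by lia.
by rewrite -Pm_left.
Qed.

End Toda4.


Section Toda5.
Variables (R : realType) (N : nat) (b a : 'I_N -> R).
Hypothesis HN : (0 < N)%N.
Hypothesis Ha : in_M b a.
Hypothesis HS : Sinv (b, a) = (b, a).

Lemma det_full x : mdet (Pm b a 1 N x) = 1.
Proof.
rewrite (Pm_det HN Ha) // add1n /=.
have e : per a N = per a 0 by have := per_per a 0; rewrite add0n.
by rewrite e divff // (per_neq0 HN Ha).
Qed.

Lemma PmNN x : mtr (Pm b a N N x) = mtr (Pm b a 1 N x) /\ mdet (Pm b a N N x) = 1.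
Proof.
split; last first.
  rewrite (Pm_det HN Ha) //.
  have -> : ((N + N).-1 = N.-1 + N)%N by lia.
  by rewrite per_per divff // (per_neq0 HN Ha).
have eN : (N.-1).+1 = N by lia.
suff aux n : n.+1 = N -> mtr (Pm b a n.+1 n.+1 x) = mtr (Pm b a 1 n.+1 x).
  by have := aux _ eN; rewrite eN.
move=> En; rewrite Pm_left.
have -> : (n.+2 = 1 + N)%N by lia.
rewrite Pm_per // mtr_comm /= add1n //.
Qed.

Lemma discr_sq x : (discr b a).[x] ^+ 2 = (discr b a).[- x] ^+ 2.
Proof.
rewrite !discr_tr.
have [c Hc] := Pm_sym HN Ha HS (n := N) x (ltac:(lia)).
have e2 : (2 * N - N = N)%N by lia.
rewrite e2 in Hc.
move: (det_full x); rewrite Hc mdet_sc mdet_T.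
have [E1 E2] := PmNN (- x).
rewrite E2 mulr1 => Hc2.
by rewrite mtr_sc mtr_T E1 exprMn Hc2 mul1r.
Qed.

End Toda5.


Section Toda6.
Variables (R : realType) (N : nat) (b a : 'I_N -> R).
Hypothesis HN : (0 < N)%N.
Hypothesis Ha : in_M b a.
Hypothesis HS : Sinv (b, a) = (b, a).

Lemma Tm_R j : (1 <= j <= N)%N -> ((2 * N - j) %% N = j %% N)%N -> Tm b a j 0 = mR R.
Proof.
case/andP=> H1 H2 Hm.
have eb : per b j = 0.
  have := per_b_sym HN HS (_ : (j <= 2 * N)%N); rewrite (per_mod b Hm).
  by move=> /(_ ltac:(lia)) => h; lra.
have ea : per a j.-1 = per a j.
  rewrite (per_a_sym HN HS (_ : (j.-1 < 2 * N)%N)); last by lia.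
  by apply: per_mod; rewrite -Hm; congr modn; lia.
have n1 := per_neq0 HN Ha j.
rewrite /Tm /mR eb ea; congr mk; field; by rewrite n1.
Qed.

Lemma discr0 : ~~ odd N -> (discr b a).[0] ^+ 2 = 4.
Proof.
move=> Hev.
have [m' eN] : exists m', N = (m'.+1).*2.
  exists (N./2).-1; move: (odd_double_half N); rewrite (negbTE Hev) add0n => h.
  lia.
set m := m'.+1.
rewrite discr_tr.
have EM : forall K, K = N -> Pm b a 1 K 0 = mmul (mmul (mmul (Tm b a K 0) (Pm b a m.+1 m' 0)) (Tm b a m 0)) (Pm b a 1 m' 0).
  move=> K eK; have -> : K = (m' + m'.+2)%N by rewrite eK eN /m; lia.
  rewrite Pm_split Pm_left.
  rewrite -[Pm b a (1 + m').+1 m'.+1 0]/(mmul (Tm b a ((1 + m').+1 + m') 0) (Pm b a (1 + m').+1 m' 0)).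
  have -> : ((1 + m').+1 + m' = m' + m'.+2)%N by lia.
  by rewrite add1n.
have {}EM := EM N erefl.
have [c Hc] := Pm_sym HN Ha HS (n := m') 0 (ltac:(lia)).
have e3 : (2 * N - m' = m.+1 + N)%N by rewrite /m; lia.
rewrite e3 Pm_per // oppr0 in Hc.
rewrite (Tm_R (j := N)) in EM; first last.
  - by congr modn; lia.
  - lia.
rewrite (Tm_R (j := m)) in EM; first last.
  - have -> : (2 * N - m = m + N)%N by rewrite /m; lia.
    by rewrite modnDr.
  - rewrite /m; lia.
rewrite Hc in EM.
move: (det_full HN Ha 0).
rewrite EM -!mmulA mR_scalar => <-.
by rewrite scalar_tr mulr_natl.
Qed.

End Toda6.


Section Toda7.
Variables (R : realType) (N : nat) (b a : 'I_N -> R).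
Hypothesis HN : (0 < N)%N.
Hypothesis Ha : in_M b a.

Lemma ypair_le y0 y1 n m : (size (ypair b a y0 y1 n).1 <= m)%N ->
  (size (ypair b a y0 y1 n).2 <= m.+1)%N ->
  (size (ypair b a y0 y1 n.+1).1 <= m.+1)%N /\ (size (ypair b a y0 y1 n.+1).2 <= m.+2)%N.
Proof.
move=> h1 h2; split => //=.
apply: leq_trans (size_scale_leq _ _) _.
apply: leq_trans (size_polyD _ _) _; rewrite size_polyN geq_max; apply/andP; split.
  apply: leq_trans (size_polyMleq _ _) _; by rewrite size_XsubC add2n /=.
apply: leq_trans (size_scale_leq _ _) _; exact: (leq_trans h1 (leqW (leqnSn m))).
Qed.

Lemma y1_size n : (1 <= n)%N -> (size (y1 b a n) <= n)%N.
Proof.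
move=> Hn; suff: (size (ypair b a 1 0 n).1 <= n.-1)%N /\ (size (ypair b a 1 0 n).2 <= n)%N.
  by case=> h _; rewrite /y1 /ysol; lia.
case: n Hn => // n _; elim: n => [|n [h1 h2]].
  split=> /=; first by rewrite size_poly0.
  rewrite mulr0 sub0r; apply: leq_trans (size_scale_leq _ _) _.
  by rewrite size_polyN; apply: leq_trans (size_scale_leq _ _) _; rewrite size_poly1.
exact: ypair_le.
Qed.

Lemma y2_size n : size (ypair b a 0 1 n).1 = n /\ size (ypair b a 0 1 n).2 = n.+1.
Proof.
elim: n => [|n [h1 h2]] /=; first by rewrite size_poly0 size_poly1.
split => //.
have nz : ('X - (per b n.+1)%:P) * (ypair b a 0 1 n).2 != 0.
  by rewrite mulf_eq0 negb_or polyXsubC_eq0 -size_poly_eq0 h2.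
rewrite size_scale ?invr_eq0 ?(per_neq0 HN Ha) // size_polyDl.
  by rewrite size_mul ?polyXsubC_eq0 -?size_poly_eq0 ?h2 // size_XsubC.
rewrite size_polyN; apply: leq_ltn_trans (size_scale_leq _ _) _.
by rewrite size_mul ?polyXsubC_eq0 -?size_poly_eq0 ?h2 // size_XsubC h1.
Qed.

Lemma discr_size : size (discr b a) = N.+1.
Proof.
rewrite /discr addrC size_polyDl.
  by rewrite /y2 /ysol /=; have [_ ->] := y2_size N.
have [_ h] := y2_size N; rewrite /y2 /ysol /= h.
by apply: leq_ltn_trans (y1_size HN) _.
Qed.

Lemma P_size : size ((discr b a) ^+ 2 - 4%:P) = (2 * N).+1.
Proof.
have nz : discr b a != 0 by rewrite -size_poly_eq0 discr_size.
rewrite size_polyDl expr2 size_mul // discr_size //; first by lia.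
rewrite size_polyN; apply: leq_ltn_trans (size_polyC_leq1 _) _; lia.
Qed.

End Toda7.

Lemma poly_pointwise (R : realType) (p q : {poly R}) : (forall x, p.[x] = q.[x]) -> p = q.
Proof.
move=> H; apply/eqP; rewrite -subr_eq0; apply/eqP.
apply: (@roots_geq_poly_eq0 _ _ (map (fun i => i%:R) (iota 0 (size (p - q))))).
- by apply/allP => x _; rewrite /root hornerD hornerN H subrr.
- rewrite map_inj_uniq ?iota_uniq // => i j /eqP; rewrite eqr_nat => /eqP //.
- by rewrite size_map size_iota.
Qed.


Section Toda8.
Variables (R : realType) (N : nat) (b a : 'I_N -> R).
Hypothesis HN : (0 < N)%N.
Hypothesis Ha : in_M b a.
Hypothesis HS : Sinv (b, a) = (b, a).

Lemma P_eval y : ((discr b a) ^+ 2 - 4%:P).[y] = (discr b a).[y] ^+ 2 - 4.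
Proof. by rewrite hornerD hornerN horner_exp hornerC. Qed.

Lemma prod_opp (s : seq R) y :
  \prod_(x <- s) (- y - x) = (-1) ^+ size s * \prod_(x <- s) (y + x).
Proof.
elim: s => [|z s IH]; first by rewrite !big_nil mulr1.
by rewrite !big_cons IH /= exprS; ring.
Qed.

Lemma rootlist_sym s : is_root_list b a s -> s = rev (map -%R s).
Proof.
case=> Hsort Hsize HP.
set P := (discr b a) ^+ 2 - 4%:P in HP.
have Pnz : P != 0 by rewrite -size_poly_eq0 /P (P_size HN Ha).
have cnz : lead_coef P != 0 by rewrite lead_coef_eq0.
have HQ : \prod_(x <- s) ('X - x%:P) = \prod_(x <- rev (map -%R s)) ('X - x%:P).
  apply: poly_pointwise => y.
  apply: (mulfI cnz); rewrite -!hornerZ -HP.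
  rewrite hornerZ horner_prod big_rev big_map.
  under eq_bigr do rewrite hornerXsubC opprK.
  rewrite /P P_eval (discr_sq HN Ha HS) -P_eval -/P {1}HP hornerZ horner_prod.
  under eq_bigr do rewrite hornerXsubC.
  rewrite prod_opp Hsize mulnC exprM sqrr_sign mul1r.
  by congr (_ * _); apply: eq_bigr => i _; rewrite addrC.
apply: (sorted_eq le_trans (@le_anti _ R)) => //.
  rewrite rev_sorted sorted_map; apply: sub_sorted Hsort => x y /=.
  by rewrite lerN2.
exact: prod_XsubC_eq.
Qed.

End Toda8.

Section SecI.
Local Open Scope classical_set_scope.

Lemma ge0_refl (R : realType) (g : R -> \bar R) (mg : measurable_fun setT g)
  (g0 : forall t, (0 <= g t)%E) (x y : R) :
  (\int[lebesgue_measure]_(t in `[x, y]) g t =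
   \int[lebesgue_measure]_(t in `[(- y)%R, (- x)%R]) g (- t)%R)%E.
Proof.
have -> : `[(- y)%R, (- x)%R] = (-%R : _ -> measurableTypeR R) @^-1` `[x, y] by rewrite opp_preimage_itvbndbnd.
rewrite -ge0_integral_pushforward//=; last exact: measurable_funS mg.
by apply: eq_measure_integral => //= A mA AS; exact/esym/lebesgue_measureN.
Qed.

Lemma Rint_refl (R : realType) (f : R -> R) (mf : measurable_fun setT f) (x y : R) :
  \int[lebesgue_measure]_(t in `[x, y]) f t = \int[lebesgue_measure]_(t in `[- y, - x]) f (- t).
Proof.
rewrite /Rintegral; congr fine.
rewrite integralE [RHS]integralE.
have mF : measurable_fun setT (EFin \o f) by apply/measurable_EFinP.
congr (_ - _)%E.
  rewrite (ge0_refl (measurable_funepos mF)); last by move=> t; exact: funepos_ge0.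
  apply: eq_integral => t _.
  exact: (esym (congr1 (fun F => F t) (funepos_comp (EFin \o f) (@GRing.opp R)))).
rewrite (ge0_refl (measurable_funeneg mF)); last by move=> t; exact: funeneg_ge0.
apply: eq_integral => t _.
exact: (esym (congr1 (fun F => F t) (funeneg_comp (EFin \o f) (@GRing.opp R)))).
Qed.

End SecI.

Section SecJ.
Local Open Scope classical_set_scope.

Lemma meas_integrand (R : realType) (p : {poly R}) :
  measurable_fun setT (fun l : R => arcosh `|p.[l] / 2|).
Proof.
rewrite /arcosh.
apply: (measurableT_comp (@measurable_ln R)).
have mq : measurable_fun setT (fun l : R => p.[l] / 2).
  by apply: measurable_funM; [exact: measurable_poly | exact: measurable_cst].
have ma : measurable_fun setT (fun l : R => `|p.[l] / 2|).
  by apply: measurableT_comp => //; exact: normr_measurable.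
apply: measurable_funD => //.
apply: (measurableT_comp (continuous_measurable_fun (@sqrt_continuous R))).
apply: measurable_funB; last exact: measurable_cst.
exact: measurable_funX.
Qed.

End SecJ.

Unset Implicit Arguments.
Theorem corollary4p3 (R : realType) (N : nat) (b a : 'I_N -> R) :
  (2 <= N)%N -> in_M b a -> Sinv (b, a) = (b, a) ->
  [/\ (forall k : nat, (1 <= k <= N - 1)%N -> action b a k = action b a (N - k)),
      (forall j : nat, (1 <= j <= 2 * N)%N -> lam b a j = - lam b a (2 * N + 1 - j)) &
      (~~ odd N -> [/\ action b a (N./2) = 0, lam b a N = 0 & lam b a N.+1 = 0])].
Proof.
move=> H2 Ha HS.
have HN : (0 < N)%N by lia.
have act0 : forall k, lam b a (2 * k) = 0 -> lam b a (2 * k).+1 = 0 -> action b a k = 0.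
  by move=> k h1 h2; rewrite /action h1 h2 set_itv1 Rintegral_set1 mulr0.
have [[s0 Hs0]|Hno] := pselect (exists s, is_root_list b a s); last first.
  have hl : forall j, lam b a j = 0.
    move=> j; rewrite /lam /lambdas xgetPN ?nth_nil //.
    by move=> s Hs; apply: Hno; exists s.
  split.
  - by move=> k _; rewrite !act0.
  - by move=> j _; rewrite !hl oppr0.
  - by move=> _; rewrite !hl act0.
have Hs : is_root_list b a (lambdas b a).
  by rewrite /lambdas; apply: (xgetPex [::] (P := [set s | is_root_list b a s])); exists s0.
set s := lambdas b a in Hs.
have hsym := rootlist_sym HN Ha HS Hs.
case: Hs => Hsort Hsize HP.
have hlam : forall j, lam b a j = nth 0 s j.-1 by [].
have part2 : forall j : nat, (1 <= j <= 2 * N)%N -> lam b a j = - lam b a (2 * N + 1 - j).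
  move=> j Hj; rewrite !hlam {1}hsym nth_rev; last by rewrite size_map Hsize; lia.
  rewrite size_map Hsize (nth_map 0); last by rewrite Hsize; lia.
  by congr (- nth _ _ _); lia.
split => //.
- move=> k Hk; rewrite /action; congr (_ * _).
  have e1 : lam b a (2 * (N - k)) = - lam b a (2 * k).+1.
    by rewrite part2 ?opprK; [congr (- lam _ _ _); lia | lia].
  have e2 : lam b a (2 * (N - k)).+1 = - lam b a (2 * k).
    by rewrite [in RHS]part2 ?opprK; [congr (lam _ _ _); lia | lia].
  rewrite e1 e2 (Rint_refl (meas_integrand (discr b a))).
  rewrite (_ : (fun t => arcosh `|(discr b a).[- t] / 2|) = (fun l => arcosh `|(discr b a).[l] / 2|)) //.
  apply: funext => t.
  rewrite -[in LHS]sqrtr_sqr -[in RHS]sqrtr_sqr !expr_div_n.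
  by rewrite (discr_sq HN Ha HS) opprK.
- move=> Hev.
  have d0 := discr0 HN Ha HS Hev.
  set P := (discr b a) ^+ 2 - 4%:P in HP.
  have Pnz : P != 0 by rewrite -size_poly_eq0 /P (P_size HN Ha).
  have cnz : lead_coef P != 0 by rewrite lead_coef_eq0.
  have s0in : (0 : R) \in s.
    rewrite -root_prod_XsubC /root.
    have : P.[0] = 0 by rewrite /P P_eval d0 subrr.
    rewrite {1}HP hornerZ => /eqP; rewrite mulf_eq0 (negbTE cnz) /=.
    by [].
  have eN : (N = N./2 * 2)%N.
    by move: (odd_double_half N); rewrite (negbTE Hev) add0n -muln2.
  have huv := part2 N ltac:(lia).
  have e : (2 * N + 1 - N = N.+1)%N by lia.
  rewrite e in huv.
  have hle : lam b a N <= lam b a N.+1.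
    rewrite !hlam; apply: (sorted_leq_nth le_trans lexx 0 Hsort); rewrite ?inE ?Hsize /=; lia.
  have hu : lam b a N = 0.
    apply/eqP; apply/negPn/negP => hne.
    have hneg : lam b a N < 0 by rewrite lt_neqAle hne /=; lra.
    set i := index 0 s.
    have hi : (i < 2 * N)%N by rewrite -Hsize index_mem.
    have hni : nth 0 s i = 0 by rewrite nth_index.
    have [hiN|hiN] := leqP i N.-1.
      have := @sorted_leq_nth _ _ le_trans lexx 0 s Hsort i N.-1.
      rewrite !inE Hsize hni -hlam => /(_ hi ltac:(lia) hiN); lra.
    have := @sorted_leq_nth _ _ le_trans lexx 0 s Hsort N i.
    rewrite !inE Hsize hni => /(_ ltac:(lia) hi ltac:(lia)).
    have : nth 0 s N = lam b a N.+1 by [].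
    move=> ->; lra.
  have hv : lam b a N.+1 = 0 by lra.
  split => //.
  apply: act0.
  + by rewrite mulnC -eN.
  + by rewrite mulnC -eN.
Qed.
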